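(* Let $\Gamma$ be a discrete group and $X$ a compact $\Gamma$-space. Then: (i) $X_0^0=\left(\bigcup_{g\in\Gamma}\partial(\operatorname{int}X^g)\right)^{c}$; (ii) if $\Gamma$ is countable, then $X_0^0$ is a dense $G_\delta$ subset of $X$; (iii) $\{x\in X:\Gamma_x=\Gamma_x^0\}\subseteq X_0^0$; (iv) $X_0^0=X$ if and only if $\operatorname{int}X^g$ is closed for all $g\in\Gamma$.
   Context: A compact $\Gamma$-space is a compact Hausdorff space with an action of $\Gamma$ by homeomorphisms. $X^g=\{x:gx=x\}$, $\partial$ denotes topological boundary, $\Gamma_x=\{g:gx=x\}$, and $\Gamma_x^0=\{g: g\text{ fixes pointwise an open neighborhood of } x\}$. $\operatorname{Sub}(\Gamma)$ is the space of subgroups of $\Gamma$ with the Chabauty topology (induced from the product topology on $\{0,1\}^\Gamma$ via characteristic functions), and $X_0^0$ is the set of points of $X$ at which the map $X\to\operatorname{Sub}(\Gamma)$, $x\mapsto\Gamma_x^0$, is continuous. *)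

(* Defs.v *)
From HB Require Import structures.
From mathcomp Require Import all_boot monoid.
From mathcomp Require Import all_classical all_reals all_analysis.
From mathcomp Require Import borel_hierarchy.
Set Implicit Arguments. Unset Strict Implicit. Unset Printing Implicit Defensive.
Local Open Scope classical_set_scope.

Definition is_action_by_homeo (G : groupType) (X : topologicalType)
    (act : G -> X -> X) : Prop :=
  (forall x, act monoid.one x = x) /\
  (forall g h x, act (monoid.mul g h) x = act g (act h x)) /\
  (forall g, continuous (act g)).

Definition fixpts (G : groupType) (X : topologicalType)
    (act : G -> X -> X) (g : G) : set X := [set x | act g x = x].

Definition boundary (X : topologicalType) (A : set X) : set X :=
  closure A `\` A°.

Definition stabG (G : groupType) (X : topologicalType)
    (act : G -> X -> X) (x : X) : set G := [set g | act g x = x].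

Definition stab0 (G : groupType) (X : topologicalType)
    (act : G -> X -> X) (x : X) : set G :=
  [set g | exists U : set X, [/\ open U, U x & U `<=` fixpts act g]].

(* characteristic function of Gamma_x^0 as a point of {0,1}^G
   (product topology); Sub(G) carries the subspace topology of it. *)
Definition stab0_chi (G : groupType) (X : topologicalType)
    (act : G -> X -> X) (x : X) : {ptws G -> bool} :=
  fun g => `[< stab0 act x g >].

Definition X00 (G : groupType) (X : topologicalType)
    (act : G -> X -> X) : set X :=
  [set x | {for x, continuous (stab0_chi act)}].

(* Main.v *)
Require Import Defs.
From HB Require Import structures.
From mathcomp Require Import all_boot monoid.
From mathcomp Require Import all_classical all_reals all_analysis.
From mathcomp Require Import borel_hierarchy.
Local Open Scope classical_set_scope.
Lemma baire (X : topologicalType) (D : nat -> set X) :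
  compact [set: X] -> hausdorff_space X ->
  (forall n, open (D n) /\ dense (D n)) -> dense (\bigcap_n D n).
Proof.
move=> cX hX oD O O0 oO.
have step : forall (W : set X) (n : nat), exists W' : set X, open W -> W !=set0 ->
    [/\ open W', W' !=set0 & closure W' `<=` W `&` D n].
  move=> W n; have [[oW W0]|nW] := pselect (open W /\ W !=set0); last first.
    by exists set0 => oW W0; exfalso; apply: nW.
  have [a [Wa Da]] := (oD n).2 W W0 oW.
  have : nbhs a (W `&` D n).
    by apply: open_nbhs_nbhs; split => //; apply: openI => //; exact: (oD n).1.
  move=> /(compact_regular (V:=setT) hX cX filterT) [U Ua cU].
  exists U° => _ _; split; first exact: open_interior.
    by exists a; exact: Ua.
  by apply: subset_trans cU; apply: closureS; exact: interior_subset.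
have step2 : forall W, exists g : nat -> set X, forall n, open W -> W !=set0 ->
    [/\ open (g n), g n !=set0 & closure (g n) `<=` W `&` D n].
  by move=> W; have [g hg] := choice (step W); exists g.
have [f hf] := choice step2.
pose V := nat_rect (fun _ => set X) (f O 0%N) (fun m Vm => f Vm m.+1).
have HV : forall n, [/\ open (V n), V n !=set0 &
    closure (V n) `<=` (if n is m.+1 then V m else O) `&` D n].
  by elim => [|n [oV V0 _]]; apply: hf.
have dec : forall n m, (m <= n)%N -> V n `<=` V m.
  elim => [|n IH] m; first by rewrite leqn0 => /eqP ->.
  rewrite leq_eqVlt => /orP [/eqP -> //|lt].
  apply: subset_trans (IH m lt).
  have [_ _ c] := HV n.+1.
  by move=> y Vy; have [] := c y (subset_closure Vy).
have FF : Filter (filter_from [set: nat] V).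
  apply: filter_from_filter; first by exists 0%N.
  move=> i j _ _; exists (maxn i j) => //.
  by move=> y Vy; split; apply: dec Vy; rewrite ?leq_maxl ?leq_maxr.
have PF : ProperFilter (filter_from [set: nat] V).
  by apply: filter_from_proper => i _; have [] := HV i.
have [p [_ clp]] := cX _ PF (filterT).
have cl : forall n, closure (V n) p.
  move=> n B Bp; apply: clp => //; by exists n.
exists p; split.
  by have [_ _ c] := HV 0%N; have [] := c p (cl 0%N).
by move=> n _; have [_ _ c] := HV n; have [] := c p (cl n).
Qed.

Section S.
Variables (G : groupType) (X : topologicalType) (act : G -> X -> X).

Lemma stab0E x g : stab0 act x g <-> (fixpts act g)° x.
Proof.
rewrite /interior nbhsE /=; split.
  by case=> U [oU Ux sU]; exists U.
by case=> U [oU Ux] sU; exists U.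
Qed.

Lemma chi_cont x : {for x, continuous (stab0_chi act)} <->
  forall g, \forall y \near x, stab0_chi act y g = stab0_chi act x g.
Proof.
split.
  move=> cx g.
  have : (stab0_chi act @ x) --> (stab0_chi act x : initial_topology (fun f : G -> bool => f g)).
    exact: ((@cvg_sup _ _ (fun g : G => Topological.class (initial_topology (fun f : G -> bool => f g))) (stab0_chi act @ x) (stab0_chi act x) _).1 cx g).
  move=> /(_ [set h : G -> bool | h g = stab0_chi act x g]).
  apply.
  apply: open_nbhs_nbhs; split => //.
  exists [set stab0_chi act x g] => //.
  exact: discrete_open.
move=> H.
apply/(@cvg_sup _ _ (fun g : G => Topological.class (initial_topology (fun f : G -> bool => f g))) (stab0_chi act @ x) (stab0_chi act x) _).2 => g A /=.
move=> HA.
have : nbhs (stab0_chi act x : initial_topology (fun f : G -> bool => f g)) A := HA.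
rewrite nbhsE => -[B [[C oC <-] Cx] BA].
apply: filterS BA _.
rewrite /= nbhs_simpl.
apply: filterS (H g) => y /= ->; exact: Cx.
Qed.

Lemma chiE y g : stab0_chi act y g = `[< (fixpts act g)° y >].
Proof. exact/asbool_equiv_eq/stab0E. Qed.

Lemma near_bd (A : set X) x : open A ->
  (\forall y \near x, `[< A y >] = `[< A x >]) <-> ~ boundary A x.
Proof.
move=> oA; rewrite /boundary.
have AA : A° = A by apply/interior_id.
rewrite AA.
have [Ax|Ax] := pselect (A x).
  rewrite (asboolT Ax); split => _; first by case.
  apply: filterS (open_nbhs_nbhs (conj oA Ax)) => y Ay; exact: asboolT.
rewrite (asboolF Ax); split.
  move=> H [cx _].
  have : (~` A)° x by apply: filterS H => y /= + Ay; by rewrite asboolT.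
  by rewrite interiorC.
move=> H.
have : (~` A)° x by rewrite interiorC => cx; apply: H.
by apply: filterS => y /= nAy; exact: asboolF.
Qed.

Lemma X00E : X00 act = ~` (\bigcup_(g in [set: G]) boundary (fixpts act g)°).
Proof.
apply/seteqP; split => x /=.
  move=> /chi_cont cx [g _]; apply/near_bd; first exact: open_interior.
  by apply: filterS (cx g) => y; rewrite !chiE.
move=> nx; apply/chi_cont => g.
have : \forall y \near x, `[< (fixpts act g)° y >] = `[< (fixpts act g)° x >].
  by apply/near_bd; [exact: open_interior| move=> bx; apply: nx; exists g].
by apply: filterS => y; rewrite !chiE.
Qed.

Lemma fix_closure g x : continuous (act g) -> hausdorff_space X ->
  closure (fixpts act g) x -> act g x = x.
Proof.
move=> cg hX clx; apply: hX => A B HA HB.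
have HB' : nbhs x (B `&` (act g @^-1` A)) by apply: filterI => //; exact: cg.
have [y [fy [By Ay]]] := clx _ HB'.
by exists y; split => //; rewrite /= -fy.
Qed.

Lemma openE' (A : set X) : open (~` boundary A).
Proof. rewrite /boundary setCD; apply: openU; [exact/closed_openC/closed_closure | exact: open_interior]. Qed.

Lemma denseE' (A : set X) : open A -> dense (~` boundary A).
Proof.
move=> oA O [y Oy] oO.
have AA : A° = A by apply/interior_id.
have [[z [Oz Az]]|nOA] := pselect (O `&` A !=set0).
  by exists z; split => //; rewrite /boundary AA => -[_].
exists y; split => //; rewrite /boundary AA => -[cy _].
apply: nOA; have [z [Az Oz]] := cy O (open_nbhs_nbhs (conj oO Oy)).
by exists z.
Qed.

Lemma closed_bd (A : set X) : open A -> (forall x, ~ boundary A x) <-> closed A.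
Proof.
move=> oA; have AA : A° = A by apply/interior_id.
rewrite /boundary AA; split.
  move=> H; apply/closure_id/seteqP; split; first exact: subset_closure.
  by move=> x cx; apply: contrapT => nAx; apply: (H x).
by move=> /closure_id cA x [cx]; rewrite -cA in cx.
Qed.
End S.

Theorem mainTheorem8 (G : groupType) (X : topologicalType) (act : G -> X -> X)
  (hX : compact [set: X]) (hH : hausdorff_space X)
  (hact : is_action_by_homeo act) :
  [/\ X00 act = ~` (\bigcup_(g in [set: G]) boundary (fixpts act g)°),
      countable [set: G] -> Gdelta (X00 act) /\ dense (X00 act),
      [set x | stabG act x = stab0 act x] `<=` X00 act
    & X00 act = [set: X] <-> (forall g : G, closed (fixpts act g)°)].
Proof.
have [_ [_ hc]] := hact.
split.
- exact: X00E.
- move=> /countable_injP [f finj].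
  pose E g := ~` boundary (fixpts act g)°.
  pose F n := [set x | forall g, f g = n -> E g x].
  have FE : forall n, F n = setT \/ exists g, F n = E g.
    move=> n; have [[g fg]|nf] := pselect (exists g, f g = n); last first.
      by left; apply/seteqP; split => // x _ g fg; exfalso; apply: nf; exists g.
    right; exists g; apply/seteqP; split => x /=; first by apply.
    move=> Ex h fh; suff -> : h = g by [].
    by apply: finj; rewrite ?in_setT // fh fg.
  have oF : forall n, open (F n) /\ dense (F n).
    move=> n; case: (FE n) => [->|[g ->]]; first split.
    + exact: openT.
    + by move=> O [y Oy] _; exists y.
    + split; first exact: openE'.
      by apply: denseE'; exact: open_interior.
  have XF : X00 act = \bigcap_n F n.
    rewrite X00E; apply/seteqP; split => x /=.
      by move=> nx n _ g _ bx; apply: nx; exists g.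
    by move=> H [g _ bx]; exact: (H (f g) I g erefl bx).
  split; first by exists F => //; move=> i; case: (oF i).
  by rewrite XF; apply: baire.
- move=> x /= sx; rewrite X00E => -[g _ [cx nx]].
  have : act g x = x.
    apply: fix_closure => //.
    by apply: closureS cx; exact: interior_subset.
  change (stabG act x g -> False); rewrite sx => /stab0E.
  by rewrite (proj1 (interior_id _) (open_interior _)) in nx.
- rewrite X00E; split.
  + move=> H g; apply/closed_bd; first exact: open_interior.
    move=> x bx; have : (~` (\bigcup_(g in [set: G]) boundary (fixpts act g)°)) x by rewrite H.
    by apply; exists g.
  + move=> H; apply/seteqP; split => // x _ [g _].
    exact: ((@closed_bd _ _ (open_interior _)).2 (H g) x).
Qed.
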